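(* Let $F_2=\langle x,y\rangle$ be the free group of rank $2$, and for $i=1,2,\ldots$ define the words $$a_i(x,y)=y^{(x y^i)^{2} x^{-1}}\, y^{-x}\in F_2 .$$ Let $G=\langle a_1,a_2,\ldots \mid r_1,r_2,\ldots\rangle$ be an arbitrary countable group given by generators and defining relations, where each relator $r_s$ is a group word in finitely many of the letters, say $r_s=r_s(a_{i_{s,1}},\ldots,a_{i_{s,k_s}})$. For each $s$ let $$r'_s(x,y)=r_s\big(a_{i_{s,1}}(x,y),\ldots,a_{i_{s,k_s}}(x,y)\big)\in F_2$$ be the word obtained by substituting $a_{i}(x,y)$ for every occurrence of $a_{i}$ in $r_s$. Then the map $\gamma: a_i\mapsto a_i(x,y)$, $i=1,2,\ldots$, defines an injective embedding of $G$ into the $2$-generator group $$T_G=\langle x,y \mid r'_1(x,y),\ r'_2(x,y),\ldots\rangle .$$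
   Context: Notation: $u^v=v^{-1}uv$ and $u^{-v}=(u^{-1})^v$. *)

(* Defs.v *)
From mathcomp Require Import all_boot.
Set Implicit Arguments. Unset Strict Implicit. Unset Printing Implicit Defensive.

(* A group word over the alphabet A: a letter (a, false) is a, (a, true) is a^-1. *)
Definition word (A : Type) := seq (A * bool).

Definition winv {A : Type} (w : word A) : word A :=
  rev (map (fun p => (p.1, ~~ p.2)) w).

(* u^v = v^-1 u v *)
Definition wconj {A : Type} (u v : word A) : word A := winv v ++ u ++ v.

Fixpoint wpow {A : Type} (u : word A) (n : nat) : word A :=
  match n with 0 => [::] | n'.+1 => u ++ wpow u n' end.

Definition wsubst {A B : Type} (f : A -> word B) (w : word A) : word B :=
  flatten (map (fun p => if p.2 then winv (f p.1) else f p.1) w).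

Inductive pres_eq {A : Type} (R : word A -> Prop) : word A -> word A -> Prop :=
| pe_refl w : pres_eq R w w
| pe_sym u v : pres_eq R u v -> pres_eq R v u
| pe_trans u v w : pres_eq R u v -> pres_eq R v w -> pres_eq R u w
| pe_cancel u a b w : pres_eq R (u ++ [:: (a, b); (a, ~~ b)] ++ w) (u ++ w)
| pe_rel u r w : R r -> pres_eq R (u ++ r ++ w) (u ++ w).

Inductive gen2 := gx | gy.
Definition wx : word gen2 := [:: (gx, false)].
Definition wy : word gen2 := [:: (gy, false)].

Definition a_word (i : nat) : word gen2 :=
  wconj wy (wpow (wx ++ wpow wy i) 2 ++ winv wx) ++ wconj (winv wy) wx.

(* The generators of G are a_1, a_2, ...; the letter n : nat stands for a_(n+1). *)
Definition gamma (n : nat) : word gen2 := a_word n.+1.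

Definition TG_rel (R : word nat -> Prop) : word gen2 -> Prop :=
  fun w => exists2 r, R r & w = wsubst gamma r.

(* Main.v *)
Require Import Defs.
From mathcomp Require Import all_boot.
From Stdlib Require Import ZArith Lia FunctionalExtensionality.
Set Implicit Arguments. Unset Strict Implicit. Unset Printing Implicit Defensive.

Lemma winv_cat (A : Type) (u v : word A) : winv (u ++ v) = winv v ++ winv u.
Proof. by rewrite /winv map_cat rev_cat. Qed.

Lemma winv_cons (A : Type) (c : A * bool) (u : word A) :
  winv (c :: u) = winv u ++ [:: (c.1, ~~ c.2)].
Proof. by rewrite /winv /= rev_cons -cats1. Qed.

Lemma winv_nil (A : Type) : winv ([::] : word A) = [::].
Proof. by []. Qed.

Lemma winvK (A : Type) (u : word A) : winv (winv u) = u.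
Proof.
elim: u => [|[a b] u IH] //=. by rewrite winv_cons winv_cat IH /= negbK.
Qed.

Lemma pe_congr (A : Type) (R : word A -> Prop) x y p q :
  pres_eq R x y -> pres_eq R (p ++ x ++ q) (p ++ y ++ q).
Proof.
elim=> {x y} [w|u v _ IH|u v w _ IH1 _ IH2|u a b w|u r w Hr].
- exact: pe_refl.
- exact: pe_sym.
- exact: pe_trans IH1 IH2.
- have -> : p ++ (u ++ [:: (a, b); (a, ~~ b)] ++ w) ++ q
      = (p ++ u) ++ [:: (a, b); (a, ~~ b)] ++ (w ++ q) by rewrite !catA.
  have -> : p ++ (u ++ w) ++ q = (p ++ u) ++ (w ++ q) by rewrite !catA.
  exact: pe_cancel.
- have -> : p ++ (u ++ r ++ w) ++ q = (p ++ u) ++ r ++ (w ++ q) by rewrite !catA.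
  have -> : p ++ (u ++ w) ++ q = (p ++ u) ++ (w ++ q) by rewrite !catA.
  exact: pe_rel.
Qed.

Lemma pe_catr (A : Type) (R : word A -> Prop) x y q :
  pres_eq R x y -> pres_eq R (x ++ q) (y ++ q).
Proof. by move=> H; have := pe_congr [::] q H. Qed.

Lemma pe_catl (A : Type) (R : word A -> Prop) x y p :
  pres_eq R x y -> pres_eq R (p ++ x) (p ++ y).
Proof. by move=> H; have := pe_congr p [::] H; rewrite !cats0. Qed.

Lemma pe_cat2 (A : Type) (R : word A -> Prop) x y x' y' :
  pres_eq R x x' -> pres_eq R y y' -> pres_eq R (x ++ y) (x' ++ y').
Proof. move=> H1 H2; apply: pe_trans (pe_catr _ H1) (pe_catl _ H2). Qed.

Lemma pe_cancel_r (A : Type) (R : word A -> Prop) x p q :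
  pres_eq R (p ++ x ++ winv x ++ q) (p ++ q).
Proof.
elim: x p q => [|[a b] x IH] p q /=; first exact: pe_refl.
rewrite winv_cons /=.
have -> : p ++ (a, b) :: x ++ (winv x ++ [:: (a, ~~ b)]) ++ q
   = (p ++ [:: (a, b)]) ++ x ++ winv x ++ ([:: (a, ~~ b)] ++ q)
  by rewrite -!catA.
apply: pe_trans (IH _ _) _.
rewrite -catA /=. exact: pe_cancel.
Qed.

Lemma pe_cancel_l (A : Type) (R : word A -> Prop) x p q :
  pres_eq R (p ++ winv x ++ x ++ q) (p ++ q).
Proof. by have := pe_cancel_r R (winv x) p q; rewrite winvK. Qed.

Lemma pe_winv (A : Type) (R : word A -> Prop) x y :
  pres_eq R x y -> pres_eq R (winv x) (winv y).
Proof.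
elim=> {x y} [w|u v _ IH|u v w _ IH1 _ IH2|u a b w|u r w Hr].
- exact: pe_refl.
- exact: pe_sym.
- exact: pe_trans IH1 IH2.
- have E : winv [:: (a, b); (a, ~~ b)] = [:: (a, b); (a, ~~ b)].
    by rewrite /winv /= negbK.
  rewrite !winv_cat E -catA. exact: pe_cancel.
- rewrite !winv_cat -catA.
  apply: (@pe_trans _ R _ (winv w ++ winv r ++ r ++ winv u)).
    apply: pe_sym. have := pe_rel (winv w ++ winv r) (winv u) Hr.
    by rewrite -!catA.
  exact: pe_cancel_l.
Qed.
Definition gl (j : nat) : word nat := if j is j'.+1 then [:: (j', false)] else [::].

Definition th (m k : Z) : word nat :=
  if Z.to_nat (k - m) is j.+1 then gl j ++ winv (gl j.+1) else [::].

Record inner := In { ih : word nat; inn : Z; ial : Z -> word nat }.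

Definition opA (w : inner) := In (ih w ++ ial w (inn w)) (inn w) (ial w).
Definition opAi (w : inner) := In (ih w ++ winv (ial w (inn w))) (inn w) (ial w).
Definition opB (w : inner) := In (ih w) (Z.succ (inn w)) (ial w).
Definition opBi (w : inner) := In (ih w) (Z.pred (inn w)) (ial w).
Definition opC (w : inner) :=
  In (ih w) (Z.pred (inn w)) (fun m => th m (inn w) ++ ial w m).
Definition opCi (w : inner) :=
  In (ih w) (Z.succ (inn w)) (fun m => winv (th m (Z.succ (inn w))) ++ ial w m).

Definition Yk (k : Z) (b : bool) : inner -> inner :=
  if (k =? -1)%Z then (if b then opAi else opA)
  else if (k =? 0)%Z then (if b then opBi else opB)
  else if (k =? 1)%Z then (if b then opCi else opC)
  else if (k =? 2)%Z then (if b then opC else opCi)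
  else id.

Definition state := (Z * inner)%type.

Definition act (l : gen2 * bool) (s : state) : state :=
  match l with
  | (gx, b) => (if b then Z.pred s.1 else Z.succ s.1, s.2)
  | (gy, b) => (s.1, Yk s.1 b s.2)
  end.

Definition eval (w : word gen2) (s : state) : state :=
  foldl (fun s l => act l s) s w.

Definition ieq (R : word nat -> Prop) (w w' : inner) :=
  [/\ pres_eq R (ih w) (ih w'), inn w = inn w' &
      forall m, pres_eq R (ial w m) (ial w' m)].

Definition seq_ (R : word nat -> Prop) (s t : state) := s.1 = t.1 /\ ieq R s.2 t.2.

Lemma ieq_refl R w : ieq R w w.
Proof. by split=> // *; apply: pe_refl. Qed.
Lemma ieq_sym R w w' : ieq R w w' -> ieq R w' w.
Proof. by case=> H1 H2 H3; split=> // *; apply: pe_sym. Qed.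
Lemma ieq_trans R w1 w2 w3 : ieq R w1 w2 -> ieq R w2 w3 -> ieq R w1 w3.
Proof.
case=> H1 H2 H3 [K1 K2 K3]; split; first exact: pe_trans H1 K1.
  by rewrite H2.
by move=> m; apply: pe_trans (H3 m) (K3 m).
Qed.

Lemma seq_refl R s : seq_ R s s.
Proof. by split=> //; apply: ieq_refl. Qed.
Lemma seq_sym R s t : seq_ R s t -> seq_ R t s.
Proof. by case=> H1 H2; split=> //; apply: ieq_sym. Qed.
Lemma seq_trans R s t u : seq_ R s t -> seq_ R t u -> seq_ R s u.
Proof. by case=> H1 H2 [K1 K2]; split; [rewrite H1 | apply: ieq_trans H2 K2]. Qed.

Lemma Yk_proper R k b w w' : ieq R w w' -> ieq R (Yk k b w) (Yk k b w').
Proof.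
case: w w' => h n a [h' n' a'] [/= H1 H2 H3]; subst n'.
rewrite /Yk; case: (k =? -1)%Z; [|case: (k =? 0)%Z; [|case: (k =? 1)%Z; [|case: (k =? 2)%Z]]];
  case: b; split=> //=; try apply: pe_cat2 => //; try apply: pe_winv => //;
  try (move=> m; apply: pe_catl => //).
Qed.

Lemma act_proper R l s t : seq_ R s t -> seq_ R (act l s) (act l t).
Proof.
case: s t => k w [k' w'] [/= <- H]; case: l => [[] b] /=; split=> //.
exact: Yk_proper.
Qed.

Lemma eval_proper R u s t : seq_ R s t -> seq_ R (eval u s) (eval u t).
Proof. by elim: u s t => [|l u IH] s t //= H; apply: IH; apply: act_proper. Qed.

Lemma eval_cat u v s : eval (u ++ v) s = eval v (eval u s).
Proof. by rewrite /eval foldl_cat. Qed.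

Lemma Yk_cancel R k b w : ieq R (Yk k (~~ b) (Yk k b w)) w.
Proof.
case: w => h n a.
rewrite /Yk; case: (k =? -1)%Z; [|case: (k =? 0)%Z; [|case: (k =? 1)%Z; [|case: (k =? 2)%Z]]];
  case: b; split=> //=; rewrite ?Z.succ_pred ?Z.pred_succ //; try (move=> m);
  try apply: pe_refl.
- by have := pe_cancel_l R (a n) h [::]; rewrite !cats0 catA.
- by have := pe_cancel_r R (a n) h [::]; rewrite !cats0 catA.
- by have := pe_cancel_r R (th m (Z.succ n)) [::] (a m).
- by have := pe_cancel_l R (th m n) [::] (a m).
- by have := pe_cancel_l R (th m n) [::] (a m).
- by have := pe_cancel_r R (th m (Z.succ n)) [::] (a m).
Qed.

Lemma act_cancel R a b s : seq_ R (act (a, ~~ b) (act (a, b) s)) s.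
Proof.
case: s => k w; case: a => /=; split=> //=.
- by case: b; rewrite /= ?Z.succ_pred ?Z.pred_succ.
- exact: ieq_refl.
- exact: Yk_cancel.
Qed.

Lemma eval_wpowy i k w : eval (wpow wy i) (k, w) = (k, ssrnat.iter i (Yk k false) w).
Proof. elim: i w => [|i IH] w //=. by rewrite IH -iterSr iterS. Qed.

Lemma eval_wpowyi i k w :
  eval (winv (wpow wy i)) (k, w) = (k, ssrnat.iter i (Yk k true) w).
Proof.
elim: i w => [|i IH] w //=.
by rewrite winv_cons eval_cat IH.
Qed.

Lemma eval_a i n w : eval (a_word i) (n, w) =
  (n, Yk (Z.pred n) true (ssrnat.iter i (Yk (Z.succ n) false) (ssrnat.iter i (Yk n false)
      (Yk (Z.pred n) false (ssrnat.iter i (Yk n true) (ssrnat.iter i (Yk (Z.succ n) true) w)))))).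
Proof.
rewrite /a_word /wconj.
have E2 : wpow (wx ++ wpow wy i) 2 = wx ++ wpow wy i ++ wx ++ wpow wy i.
  by rewrite /= cats0.
rewrite E2 !winv_cat winvK !eval_cat.
have Ex : forall k v, eval wx (k, v) = (Z.succ k, v) by [].
have Exi : forall k v, eval (winv wx) (k, v) = (Z.pred k, v) by [].
have Ey : forall k v, eval wy (k, v) = (k, Yk k false v) by [].
have Eyi : forall k v, eval (winv wy) (k, v) = (k, Yk k true v) by [].
rewrite !(Ex, Exi, Ey, Eyi, eval_wpowy, eval_wpowyi).
by rewrite ?Z.pred_succ ?Z.succ_pred.
Qed.

Lemma iter_proper R i k b w w' :
  ieq R w w' -> ieq R (ssrnat.iter i (Yk k b) w) (ssrnat.iter i (Yk k b) w').
Proof. by elim: i => [|i IH] //= H; apply: Yk_proper; apply: IH. Qed.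

Lemma iter_cancel R i k b w :
  ieq R (ssrnat.iter i (Yk k (~~ b)) (ssrnat.iter i (Yk k b) w)) w.
Proof.
elim: i => [|i IH]; first exact: ieq_refl.
rewrite iterSr iterS. apply: ieq_trans IH.
apply: iter_proper. exact: Yk_cancel.
Qed.

Lemma iter_idf (T : Type) i (x : T) : ssrnat.iter i id x = x.
Proof. by elim: i => //= i ->. Qed.

Lemma Yk2 b : Yk 2 b = Yk 1 (~~ b).
Proof. by case: b. Qed.

Lemma Yk_out k b : (k <> -1 /\ k <> 0 /\ k <> 1 /\ k <> 2)%Z -> Yk k b = id.
Proof.
move=> [H1 [H2 [H3 H4]]]; rewrite /Yk.
by rewrite (proj2 (Z.eqb_neq _ _) H1) (proj2 (Z.eqb_neq _ _) H2)
  (proj2 (Z.eqb_neq _ _) H3) (proj2 (Z.eqb_neq _ _) H4).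
Qed.

Fixpoint Qf (m k : Z) (i : nat) : word nat :=
  if i is i'.+1 then winv (th m (k + Z.of_nat i)) ++ Qf m k i' else [::].
Fixpoint Pf (m k : Z) (i : nat) : word nat :=
  if i is i'.+1 then Pf m k i' ++ th m (k + Z.of_nat i) else [::].

Lemma QfP m k i : Qf m k i = winv (Pf m k i).
Proof. by elim: i => //= i ->; rewrite winv_cat. Qed.

Lemma succ_nat k i : Z.succ (k + Z.of_nat i) = (k + Z.of_nat i.+1)%Z.
Proof. lia. Qed.

Lemma iter_opCi i h k a : ssrnat.iter i opCi (In h k a) =
  In h (k + Z.of_nat i) (fun m => Qf m k i ++ a m).
Proof.
elim: i => [|i IH] /=; first by rewrite Z.add_0_r.
rewrite IH /opCi /= succ_nat; congr In.
by apply: functional_extensionality => m; rewrite catA.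
Qed.

Lemma iter_opBi i h k a : ssrnat.iter i opBi (In h k a) = In h (k - Z.of_nat i) a.
Proof.
elim: i => [|i IH] /=; first by rewrite Z.sub_0_r.
rewrite IH /opBi /=; congr In; lia.
Qed.

Lemma iter_opB i h k a : ssrnat.iter i opB (In h k a) = In h (k + Z.of_nat i) a.
Proof.
elim: i => [|i IH] /=; first by rewrite Z.add_0_r.
rewrite IH /opB /=; congr In; lia.
Qed.

Lemma iter_opC i h k b : ssrnat.iter i opC (In h (k + Z.of_nat i) b) =
  In h k (fun m => Pf m k i ++ b m).
Proof.
elim: i b => [|i IH] b; first by rewrite /= Z.add_0_r.
rewrite iterSr {2}/opC /= -succ_nat Z.pred_succ IH succ_nat; congr In.
by apply: functional_extensionality => m; rewrite catA.
Qed.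

Lemma th_diag k i : th k (k + Z.of_nat i.+1) = gl i ++ winv (gl i.+1).
Proof. by rewrite /th Z.add_simpl_l Nat2Z.id. Qed.

Lemma Qf_diag R k i : pres_eq R (Qf k k i) (gl i).
Proof.
elim: i => [|i IH] /=; first exact: pe_refl.
rewrite th_diag winv_cat winvK.
apply: (@pe_trans _ R _ (gl i.+1 ++ winv (gl i) ++ gl i)).
  by rewrite -catA; apply: pe_catl; apply: pe_catl.
by have := pe_cancel_l R (gl i) (gl i.+1) [::]; rewrite !cats0.
Qed.

Definition rho (n : Z) (i : nat) (w : inner) : inner :=
  if (n =? 0)%Z then In (ih w ++ gl i) (inn w) (ial w) else w.

Lemma level_a R i n w :
  ieq R (Yk (Z.pred n) true (ssrnat.iter i (Yk (Z.succ n) false) (ssrnat.iter i (Yk n false)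
      (Yk (Z.pred n) false (ssrnat.iter i (Yk n true) (ssrnat.iter i (Yk (Z.succ n) true) w))))))
    (rho n i w).
Proof.
rewrite /rho.
have [->|n0] := Z.eq_dec n 0.
  rewrite /=.
  case: w => h k a.
  have E1 : Yk 1 true = opCi by [].
  have E2 : Yk 0 true = opBi by [].
  have E3 : Yk (-1) false = opA by [].
  have E4 : Yk 0 false = opB by [].
  have E5 : Yk 1 false = opC by [].
  have E6 : Yk (-1) true = opAi by [].
  rewrite E1 E2 E3 E4 E5 E6 iter_opCi iter_opBi Z.add_simpl_r {1}/opA /=.
  rewrite iter_opB iter_opC /opAi /=.
  split=> //= [|m].
    rewrite !QfP !winv_cat winvK -!catA.
    apply: pe_catl.
    apply: pe_trans (pe_cancel_r R (a k) (winv (Pf k k i)) (Pf k k i ++ winv (Pf k k i))) _.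
    apply: pe_trans (pe_cancel_l R (Pf k k i) [::] (winv (Pf k k i))) _.
    by rewrite /= -QfP; apply: Qf_diag.
  by rewrite QfP; have := pe_cancel_r R (Pf m k i) [::] (a m).
rewrite (proj2 (Z.eqb_neq _ _) n0).
have [->|n1] := Z.eq_dec n 1.
  rewrite /= !Yk2 /=.
  apply: ieq_trans (Yk_cancel R 0 false w).
  apply: Yk_proper. apply: ieq_trans (iter_cancel R i 1 false _).
  apply: iter_proper. apply: iter_proper. apply: Yk_proper.
  exact: (iter_cancel R i 1 false w).
have [->|n2] := Z.eq_dec n 2.
  rewrite /= !Yk2 /= !iter_idf.
  rewrite -[Yk 1 false (ssrnat.iter _ _ _)]iterS -[Yk 1 true (ssrnat.iter _ _ _)]iterS.
  exact: (iter_cancel R i.+1 1 false w).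
have [->|n3] := Z.eq_dec n 3.
  rewrite /= !iter_idf !Yk2 /=.
  exact: (Yk_cancel R 1 true w).
have Hp : (Z.pred n <> -1 /\ Z.pred n <> 0 /\ Z.pred n <> 1 /\ Z.pred n <> 2)%Z by lia.
rewrite !(Yk_out _ Hp).
rewrite /=.
apply: ieq_trans (iter_cancel R i (Z.succ n) true w).
apply: iter_proper. exact: iter_cancel R i n true _.
Qed.

Definition upd (n : Z) (x : word nat) (w : inner) : inner :=
  if (n =? 0)%Z then In (ih w ++ x) (inn w) (ial w) else w.

Lemma upd_proper R n x w w' : ieq R w w' -> ieq R (upd n x w) (upd n x w').
Proof.
rewrite /upd; case: (n =? 0)%Z => // [[H1 H2 H3]]; split=> //=.
exact: pe_catr.
Qed.

Lemma eval_gamma R j n w : seq_ R (eval (gamma j) (n, w)) (n, upd n [:: (j, false)] w).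
Proof. by rewrite /gamma eval_a; split=> //=; exact: (level_a R j.+1 n w). Qed.

Lemma eval_inv R u s : seq_ R (eval (u ++ winv u) s) s.
Proof.
elim: u s => [|l u IH] s /=; first exact: seq_refl.
rewrite winv_cons catA eval_cat.
have E1 : forall l' t, eval [:: l'] t = act l' t by [].
rewrite E1; case: l => a b.
apply: seq_trans (act_proper _ (IH _)) _.
exact: act_cancel.
Qed.

Lemma eval_gammai R j n w :
  seq_ R (eval (winv (gamma j)) (n, w)) (n, upd n [:: (j, true)] w).
Proof.
set t := (n, upd n [:: (j, true)] w).
have H1 : seq_ R (eval (gamma j) t) (n, w).
  apply: seq_trans (eval_gamma R j n _) _.
  rewrite /upd; case: (n =? 0)%Z; split=> //=; last exact: ieq_refl.
  split=> //= [|m]; last exact: pe_refl.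
  have := pe_cancel_l R [:: (j, false)] (ih w) [::]. by rewrite !cats0 -catA.
apply: seq_trans (eval_proper _ (seq_sym H1)) _.
rewrite -eval_cat. exact: eval_inv.
Qed.

Lemma eval_subst R u n w :
  seq_ R (eval (wsubst gamma u) (n, w)) (n, upd n u w).
Proof.
elim: u w => [|[j b] u IH] w.
  rewrite /upd; case: (n =? 0)%Z; rewrite /= ?cats0; case: w => *; exact: seq_refl.
rewrite /wsubst /= -/(wsubst gamma u) eval_cat.
have Hp : seq_ R (eval (if b then winv (gamma j) else gamma j) (n, w)) (n, upd n [:: (j, b)] w).
  by case: b; [apply: eval_gammai | apply: eval_gamma].
apply: seq_trans (eval_proper _ Hp) _.
apply: seq_trans (IH _) _.
rewrite /upd; case: (n =? 0)%Z; rewrite /= -?catA; exact: seq_refl.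
Qed.

Lemma sem R a b : pres_eq (TG_rel R) a b -> forall s, seq_ R (eval a s) (eval b s).
Proof.
elim=> {a b} [w|u v _ IH|u v w _ IH1 _ IH2|u a b w|u r w [r0 Hr ->]] s.
- exact: seq_refl.
- exact: seq_sym.
- exact: seq_trans (IH1 s) (IH2 s).
- rewrite !eval_cat; apply: eval_proper.
  rewrite /eval /=. exact: act_cancel.
- rewrite !eval_cat; apply: eval_proper.
  case: (eval u s) => n w'.
  apply: seq_trans (eval_subst R r0 n w') _.
  rewrite /upd; case: (n =? 0)%Z; split=> //; last exact: ieq_refl.
  split=> //= [|m]; last exact: pe_refl.
  by have := pe_rel (ih w') [::] Hr; rewrite !cats0.
Qed.

Lemma wsubst_cat (A B : Type) (f : A -> word B) u v :
  wsubst f (u ++ v) = wsubst f u ++ wsubst f v.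
Proof. by rewrite /wsubst map_cat flatten_cat. Qed.

Theorem theorem1p1 (R : word nat -> Prop) (u v : word nat) :
  pres_eq R u v <-> pres_eq (TG_rel R) (wsubst gamma u) (wsubst gamma v).
Proof.
split.
- elim=> {u v} [w|u v _ IH|u v w _ IH1 _ IH2|u a b w|u r w Hr].
  + exact: pe_refl.
  + exact: pe_sym.
  + exact: pe_trans IH1 IH2.
  + rewrite !wsubst_cat.
    have E : forall l, wsubst gamma l = flatten (map (fun p => if p.2 then winv (gamma p.1) else gamma p.1) l) by [].
    case: b; rewrite [wsubst _ [:: _; _]]E /= cats0 -catA.
    * by have := pe_cancel_l (TG_rel R) (gamma a) (wsubst gamma u) (wsubst gamma w).
    * by have := pe_cancel_r (TG_rel R) (gamma a) (wsubst gamma u) (wsubst gamma w).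
  + rewrite !wsubst_cat. apply: pe_rel. by exists r.
- move=> H.
  have := sem H (0%Z, In [::] 0%Z (fun _ => [::])).
  move=> H1.
  have H2 := seq_trans (seq_sym (eval_subst R u 0 _)) (seq_trans H1 (eval_subst R v 0 _)).
  by case: H2 => _ [].
Qed.
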